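(* Let $\mathcal N$ be a network with a binary collision profile and character $D^*$, let $S$ be a schedule, and let $T\ge\max(D^*,1)$ be an integer such that $S[T,k]\in\mathcal M_T$ and $(S[T,k],S[T,k+1])\in\mathcal E_T$ for every $k\in\mathbb Z$. Then $S$ is collision free.
   Context: A network is a triple $\mathcal N=(\mathcal L,\mathcal I,D_{\mathcal L})$ where $\mathcal L$ is a finite nonempty set of links, each $\mathcal I(l)$ is a collection of nonempty subsets of $\mathcal L$, and $D_{\mathcal L}$ assigns an integer $D_{\mathcal L}(l,l')$ to every pair with $l'\in\phi$ for some $\phi\in\mathcal I(l)$. The profile is binary if every $\phi\in\mathcal I(l)$ is a singleton. The character is $D^*=\max_{l}\max_{\phi\in\mathcal I(l)}\max_{l'\in\phi}|D_{\mathcal L}(l,l')|$ (0 if there are no collision sets). A schedule is a map $S:\mathcal L\times\mathbb Z\to\{0,1\}$; $S(l,t)$ has a collision if there is $\phi\in\mathcal I(l)$ with $S(l',t+D_{\mathcal L}(l,l'))=1$ for all $l'\in\phi$; $S$ is collision free if no $(l,t)$ with $S(l,t)=1$ has a collision. $S[T,k]$ is the $|\mathcal L|\times T$ binary matrix with $S[T,k](l,j)=S(l,kT+j)$, $j=0,\dots,T-1$. The scheduling graph $(\mathcal M_T,\mathcal E_T)$ has vertex set $\mathcal M_T$ = all $|\mathcal L|\times T$ binary matrices $A$ with $A=S'[T,0]$ for some collision-free schedule $S'$, and edge set $\mathcal E_T$ = all ordered pairs $(A,B)$ with $A=S'[T,0]$, $B=S'[T,1]$ for some collision-free schedule $S'$.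 *)

(* Defs.v *)
From mathcomp Require Import all_boot all_order all_algebra.
Set Implicit Arguments. Unset Strict Implicit. Unset Printing Implicit Defensive.
Import Order.TTheory GRing.Theory Num.Theory.
Local Open Scope ring_scope.

Record network (L : finType) := Network {
  coll : L -> {set {set L}};
  delay : L -> L -> int           (* D_L(l,l'); only values on relevant pairs matter *)
}.

Definition network_wf (L : finType) (N : network L) : Prop :=
  (0 < #|L|)%N /\ forall l (phi : {set L}), phi \in coll N l -> phi != set0.

Definition binary_profile (L : finType) (N : network L) : Prop :=
  forall l (phi : {set L}), phi \in coll N l -> #|phi| = 1%N.

Definition character (L : finType) (N : network L) : nat :=
  \max_(l : L) \max_(phi in coll N l) \max_(l' in phi) `|delay N l l'|%N.

Definition schedule (L : finType) := L -> int -> bool.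

Definition has_collision (L : finType) (N : network L) (S : schedule L)
    (l : L) (t : int) : Prop :=
  exists2 phi, phi \in coll N l &
    forall l', l' \in phi -> S l' (t + delay N l l') = true.

Definition collision_free (L : finType) (N : network L) (S : schedule L) : Prop :=
  forall l t, S l t = true -> ~ has_collision N S l t.

(* S[T,k] : the |L| x T binary matrix, rows indexed by links, columns by 'I_T *)
Definition block (L : finType) (S : schedule L) (T : nat) (k : int)
    : {ffun L * 'I_T -> bool} :=
  [ffun p => S p.1 (k * (T%:Z) + (nat_of_ord p.2)%:Z)].

Definition in_MT (L : finType) (N : network L) (T : nat)
    (A : {ffun L * 'I_T -> bool}) : Prop :=
  exists S' : schedule L, collision_free N S' /\ A = block S' T 0.

Definition in_ET (L : finType) (N : network L) (T : nat)
    (A B : {ffun L * 'I_T -> bool}) : Prop :=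
  exists S' : schedule L, collision_free N S' /\ A = block S' T 0 /\ B = block S' T 1.

(* Main.v *)
Require Import Defs.
From mathcomp Require Import all_boot all_order all_algebra.
From mathcomp Require Import zify.
Import Order.TTheory GRing.Theory Num.Theory.
Local Open Scope ring_scope.

Lemma agree (L : finType) (N : network L) (S : schedule L) (T : nat) (m : int) :
  in_ET N (block S T m) (block S T (m + 1)) ->
  exists S', collision_free N S' /\
    forall l u, m * T%:Z <= u -> u < m * T%:Z + 2 * T%:Z ->
      S l u = S' l (u - m * T%:Z).
Proof.
case=> S' [cf [HA HB]]; exists S'; split=> // l u h1 h2.
have [hr|hr] := boolP (u - m * T%:Z < T%:Z).
- have hn : (absz (u - m * T%:Z)%R < T)%N by lia.
  have := congr1 (fun f : {ffun L * 'I_T -> bool} => f (l, Ordinal hn)) HA.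
  rewrite !ffunE /= => E.
  have e : (absz (u - m * T%:Z)%R)%:Z = u - m * T%:Z by lia.
  rewrite e mul0r add0r in E.
  by rewrite -E; congr (S l); lia.
- have hn : (absz (u - m * T%:Z - T%:Z)%R < T)%N by lia.
  have := congr1 (fun f : {ffun L * 'I_T -> bool} => f (l, Ordinal hn)) HB.
  rewrite !ffunE /= => E.
  have e : (absz (u - m * T%:Z - T%:Z)%R)%:Z = u - m * T%:Z - T%:Z by lia.
  rewrite e mul1r in E.
  have e2 : T%:Z + (u - m * T%:Z - T%:Z) = u - m * T%:Z by lia.
  rewrite e2 in E.
  by rewrite -E; congr (S l); lia.
Qed.

Theorem theorem5 (L : finType) (N : network L) (S : schedule L) (T : nat) :
  network_wf N ->
  binary_profile N ->
  (maxn (character N) 1 <= T)%N ->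
  (forall k : int, in_MT N (block S T k)) ->
  (forall k : int, in_ET N (block S T k) (block S T (k + 1))) ->
  collision_free N S.
Proof.
move=> _ bin hT _ hE l t Slt [phi phiI Hphi].
have /cards1P [l' ephi] : #|phi| == 1%N by rewrite (bin l phi phiI).
have l'in : l' \in phi by rewrite ephi set11.
have hd : (`|delay N l l'|%N <= character N)%N.
  rewrite /character.
  apply: leq_trans (leq_bigmax l).
  apply: leq_trans (leq_bigmax_cond _ phiI).
  exact: leq_bigmax_cond l'in.
set d := delay N l l' in hd.
have Sd := Hphi l' l'in.
have Tpos : (0 < T)%N by lia.
have Tz : 0 < T%:Z by rewrite ltz_nat.
set k := (t %/ T%:Z)%Z.
have ht := divz_eq t T%:Z.
have j0 : 0 <= (t %% T%:Z)%Z by apply: modz_ge0; lia.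
have j1 : (t %% T%:Z)%Z < T%:Z.
  by have := ltz_pmod t Tz.
have main : forall m, m * T%:Z <= t -> t < m * T%:Z + 2 * T%:Z ->
    m * T%:Z <= t + d -> t + d < m * T%:Z + 2 * T%:Z -> False.
  move=> m a1 a2 a3 a4.
  have [S' [cf ag]] := @agree L N S T m (hE m).
  apply: (cf l (t - m * T%:Z)); first by rewrite -ag.
  exists phi => // l'' ; rewrite ephi in_set1 => /eqP ->.
  rewrite -/d.
  have -> : t - m * T%:Z + d = t + d - m * T%:Z by lia.
  by rewrite -ag.
have [c|c] := boolP (k * T%:Z <= t + d).
- apply: (main k); try lia.
- apply: (main (k - 1)); try lia.
Qed.
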